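(* Let $G$ be a trigraph and let $\Gamma\subseteq\operatorname{Aut}(G)$ be a solvable group. Then there exists a partial contraction sequence of $G$ of width at most $4\Delta(G)$ whose last partition is the partition of $V(G)$ into $\Gamma$-orbits, i.e., which contracts $G$ to $G/\Gamma$.
   Context: A trigraph is a finite simple graph whose edges are each colored red or black. $\operatorname{Aut}(G)$ is the automorphism group of the underlying simple graph of $G$ (automorphisms need not preserve colors); $\Delta(G)$ is the maximum degree. The red degree of a vertex is the number of red edges incident to it. For a partition $\mathcal{P}$ of $V(G)$, the quotient trigraph $G/\mathcal{P}$ has vertex set $\mathcal{P}$; two distinct parts $U,W$ are joined by a black edge if every pair $\{u,w\}$ with $u\in U,w\in W$ is a black edge of $G$, are non-adjacent if no such pair is an edge, and are joined by a red edge otherwise; $G/\Gamma$ is the quotient by the partition into $\Gamma$-orbits. A partial contraction sequence of an $n$-vertex trigraph $G$ is a sequence $\mathcal{P}_n,\dots,\mathcal{P}_i$ of partitions of $V(G)$ where $\mathcal{P}_n$ is the partition into singletons and each $\mathcal{P}_j$ arises from $\mathcal{P}_{j+1}$ by merging two parts; its width is the maximum red degree over all $G/\mathcal{P}_j$ in the sequence. *)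

(* Defs.v *)
From HB Require Import structures.
From mathcomp Require Import all_boot all_fingroup all_solvable.
Set Implicit Arguments. Unset Strict Implicit. Unset Printing Implicit Defensive.

(* A trigraph on vertex type V: a finite simple graph (symmetric, irreflexive
   edge relation) whose edges are colored red or black; [tred] marks the red
   edges (only meaningful on edges). *)
Record trigraph (V : finType) := Trigraph {
  tedge : rel V;
  tred : rel V;
  tedge_sym : symmetric tedge;
  tedge_irr : irreflexive tedge;
  tred_sub : subrel tred tedge;
  tred_sym : symmetric tred }.

Section Trigraphs.
Variables (V : finType) (G : trigraph V).

Definition tblack (u w : V) : bool := tedge G u w && ~~ tred G u w.

(* automorphism of the underlying simple graph (colors need not be preserved) *)
Definition is_aut (g : {perm V}) : bool :=
  [forall x, forall y, tedge G (g x) (g y) == tedge G x y].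

Definition aut_subgroup (Gam : {set {perm V}}) : bool :=
  [forall g in Gam, is_aut g].

Definition degree (v : V) : nat := #|[set w | tedge G v w]|.

Definition maxdeg : nat := \max_(v : V) degree v.

(* quotient trigraph G/P: adjacency types between two distinct parts *)
Definition qblack (U W : {set V}) : bool :=
  [forall u in U, forall w in W, tblack u w].
Definition qnonadj (U W : {set V}) : bool :=
  [forall u in U, forall w in W, ~~ tedge G u w].
Definition qred (U W : {set V}) : bool := ~~ qblack U W && ~~ qnonadj U W.

Definition qred_degree (P : {set {set V}}) (U : {set V}) : nat :=
  #|[set W in P | (W != U) && qred U W]|.

Definition qmax_red_degree (P : {set {set V}}) : nat :=
  \max_(U in P) qred_degree P U.

End Trigraphs.

Definition singletons_partition (V : finType) : {set {set V}} :=
  [set [set v] | v : V].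

Definition merge_step (V : finType) (P Q : {set {set V}}) : Prop :=
  exists A B, [/\ A \in P, B \in P, A != B & Q = (P :\ A :\ B) :|: [set A :|: B]].

Definition gamma_orbit_partition (V : finType) (Gam : {set {perm V}}) : {set {set V}} :=
  [set orbit 'P Gam x | x : V].

(* A partial contraction sequence P_n, ..., P_i is represented by the list
   s = [:: P_{n-1}; ...; P_i] following P_n = singletons_partition. *)
Fixpoint contraction_path (V : finType) (P : {set {set V}}) (s : seq {set {set V}}) : Prop :=
  match s with
  | [::] => True
  | Q :: s' => merge_step P Q /\ contraction_path Q s'
  end.

(* Main.v *)
Require Import Defs.
From mathcomp Require Import all_boot all_fingroup all_solvable zify.
Set Implicit Arguments. Unset Strict Implicit. Unset Printing Implicit Defensive.

Definition kpart (V : finType) (T : eqType) (k : V -> T) : {set {set V}} :=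
  [set [set u | k u == k x] | x : V].

Lemma contraction_path_cat (V : finType) (P : {set {set V}}) s1 s2 :
  contraction_path P s1 -> contraction_path (last P s1) s2 ->
  contraction_path P (s1 ++ s2).
Proof. by elim: s1 P => [|Q s IH] P //= [h1 h2] h3; split => //; apply: IH. Qed.

Section Merge.
Variables (V : finType) (T : eqType) (kf kg : V -> T).
Hypothesis fg : forall u v, kf u = kf v -> kg u = kg v.
Hypothesis two : forall u v w, kg u = kg v -> kg u = kg w ->
  [\/ kf u = kf v, kf u = kf w | kf v = kf w].

Definition closedS (S : {set V}) := forall u v, kg u = kg v -> (u \in S) = (v \in S).
Definition kS (S : {set V}) v : T + T := if v \in S then inr (kg v) else inl (kf v).
Definition gcl x := [set u | kg u == kg x].
Definition fcl x := [set u | kf u == kf x].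
Definition parts (S : {set V}) := [set (if x \in S then gcl x else fcl x) | x : V].

Lemma kpart_parts S : closedS S -> kpart (kS S) = parts S.
Proof.
move=> cS; apply: eq_imset => x; apply/setP => u; rewrite /kS /gcl /fcl.
case xS: (x \in S); case uS: (u \in S); rewrite !inE uS.
- by [].
- apply/esym/eqP => e; by rewrite (cS _ _ e) xS in uS.
- apply/esym/eqP => e; by rewrite (cS _ _ (fg e)) xS in uS.
- by [].
Qed.

Lemma fcl_sub x : fcl x \subset gcl x.
Proof. by apply/subsetP => u; rewrite !inE => /eqP /fg ->. Qed.

Lemma merge1 S v : closedS S -> v \notin S ->
  let S' := S :|: gcl v in
  closedS S' /\ (parts S' = parts S \/ merge_step (parts S) (parts S')).
Proof.
move=> cS vS S'.
have cS' : closedS S'.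
  by move=> u w e; rewrite !inE (cS _ _ e) e.
have eqout x : kg x != kg v -> (if x \in S' then gcl x else fcl x) =
                                 (if x \in S then gcl x else fcl x).
  by move=> ne; rewrite /S' !inE (negbTE ne) orbF.
have inS'v x : kg x = kg v -> x \in S' by move=> e; rewrite !inE e eqxx orbT.
have notSv x : kg x = kg v -> x \notin S by move=> e; rewrite (cS _ _ e).
have gclE x : kg x = kg v -> gcl x = gcl v.
  by move=> e; apply/setP => u; rewrite !inE e.
split => //.
case: (boolP [exists w, (kg w == kg v) && (kf w != kf v)]) => [/existsP [w /andP [/eqP wv nfw]]|nex].
- right; exists (fcl v), (fcl w); split.
  + by apply/imsetP; exists v => //; rewrite (negbTE vS).
  + by apply/imsetP; exists w => //; rewrite (negbTE (notSv _ wv)).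
  + apply/negP => /eqP e; have : v \in fcl v by rewrite !inE.
    by rewrite e !inE eq_sym (negbTE nfw).
  have AB : fcl v :|: fcl w = gcl v.
    apply/setP => u; rewrite /fcl /gcl !inE; apply/idP/idP.
    * by case/orP => /eqP /fg e; apply/eqP; rewrite e ?wv.
    * move=> /eqP e; case: (two (esym e) (esym wv)) => [e1|e1|e1].
      - by rewrite e1 eqxx.
      - by rewrite e1 eqxx in nfw.
      - by rewrite e1 eqxx orbT.
  apply/setP => C; rewrite !inE; apply/imsetP/idP.
  + case=> x _ ->; case: (eqVneq (kg x) (kg v)) => [e|ne].
    * by rewrite (inS'v _ e) (gclE _ e) -AB eqxx orbT.
    * rewrite eqout //; apply/orP; left.
      have xin : x \in (if x \in S then gcl x else fcl x) by case: ifP; rewrite !inE.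
      apply/and3P; split; last by apply/imsetP; exists x.
      - apply/eqP => e; move: xin; rewrite e !inE => /eqP /fg; rewrite wv => e2.
        by rewrite e2 eqxx in ne.
      - apply/eqP => e; move: xin; rewrite e !inE => /eqP /fg e2.
        by rewrite e2 eqxx in ne.
  + case/orP => [/and3P [nB nA /imsetP [x _ eC]]|/eqP ->].
    * case: (eqVneq (kg x) (kg v)) => [e|ne].
      - move: eC; rewrite (negbTE (notSv _ e)) => eC.
        case: (two e (etrans e (esym wv))) => [e1|e1|e1].
        + by rewrite eC /fcl e1 eqxx in nA.
        + by rewrite eC /fcl e1 eqxx in nB.
        + by rewrite e1 eqxx in nfw.
      - by exists x => //; rewrite eqout.
    * by exists v => //; rewrite (inS'v _ erefl) AB.
- left; apply: eq_imset => x.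
  case: (eqVneq (kg x) (kg v)) => [e|ne]; last by rewrite eqout.
  rewrite (inS'v _ e) (negbTE (notSv _ e)) (gclE _ e).
  apply/setP => u; rewrite !inE; apply/idP/idP => [/eqP eu|/eqP /fg ->].
  + have : kf u == kf v.
      by apply: contraNT nex => ne; apply/existsP; exists u; rewrite eu eqxx ne.
    move/eqP ->; have : kf x == kf v.
      by apply: contraNT nex => ne; apply/existsP; exists x; rewrite e eqxx ne.
    by move/eqP ->.
  + by rewrite e.
Qed.

Lemma merge_all S : closedS S ->
  exists s, [/\ contraction_path (parts S) s, last (parts S) s = parts setT &
     forall R, R \in s -> exists2 S', closedS S' & R = parts S'].
Proof.
have [n] := ubnP #|~: S|; elim: n S => // n IH S lt cS.
case: (eqVneq S setT) => [->|neT].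
  by exists [::]; split.
have [v vS] : exists v, v \notin S.
  case: (pickP [pred x | x \notin S]) => [v vin|h]; first by exists v.
  case/eqP: neT; apply/setP => x; move: (h x); rewrite !inE /=.
  by move/negbFE => ->.
have [cS' hS'] := merge1 cS vS.
have lt' : #|~: (S :|: gcl v)| < n.
  suff h : #|~: (S :|: gcl v)| < #|~: S| by apply: leq_trans h _; rewrite -ltnS.
  apply: proper_card; apply/properP; split.
    by rewrite setCS subsetUl.
  by exists v; rewrite !inE ?eqxx // orbT.
have [s [p1 p2 p3]] := IH _ lt' cS'.
case: hS' => [e|ms].
  by exists s; rewrite -e; split.
exists (parts (S :|: gcl v) :: s); split => //.
by move=> R; rewrite inE => /orP [/eqP ->|/p3 //]; exists (S :|: gcl v).
Qed.

Lemma parts0 : parts set0 = kpart kf.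
Proof. by apply: eq_imset => x; rewrite inE. Qed.
Lemma partsT : parts setT = kpart kg.
Proof. by apply: eq_imset => x; rewrite inE. Qed.
Lemma closed0 : closedS set0. Proof. by move=> *; rewrite !inE. Qed.

End Merge.

Lemma arith d m b t i : 0 < d -> 0 < m -> i %/ (2*d) = b ->
  ((i + t) %% m) %/ d \in [:: 0; ((b*(2*d) + t) %% m) %/ d;
     (((b*(2*d) + t) %% m) %/ d).+1;
     if m <= (b*(2*d) + t) %% m + d then 1 else (((b*(2*d) + t) %% m) %/ d).+2].
Proof.
move=> d0 m0 ib.
set x := (b*(2*d) + t) %% m.
have xm : x < m by rewrite ltn_pmod.
set e := i %% (2*d).
have e2 : e < 2*d by rewrite ltn_pmod // muln_gt0.
have ie : i = b*(2*d) + e by rewrite -ib /e {1}(divn_eq i (2*d)).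
have jE : (i + t) %% m = (x + e) %% m.
  by rewrite /x modnDml ie addnAC.
rewrite jE; set j := (x + e) %% m.
have jm : j < m by rewrite ltn_pmod.
have qd := divn_eq x d; have qd2 : x %% d < d by rewrite ltn_pmod.
set q := x %/ d in qd qd2 *.
have ub k : j < q * d + k * d -> j %/ d < q + k by rewrite ltn_divLR // mulnDl.
have ub0 : j < 2 * d -> j %/ d < 2 by rewrite ltn_divLR.
have ds : j < d -> j %/ d = 0 by apply: divn_small.
have lbj : x <= j -> q <= j %/ d by apply: leq_div2r.
have jA : x + e < m -> j = x + e by move=> A; rewrite /j modn_small.
have jB : m <= x + e -> j <= x + e - m.
  by move=> B; rewrite /j -{1}(subnK B) modnDr; exact: leq_mod.
move: qd qd2 ub ub0 ds lbj; set r := x %% d; set Y := j %/ d; set QD := q * d; clearbody Y QD r j q x e.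
move=> qd qd2 ub ub0 ds lbj.
have [A|B] := ltnP (x + e) m.
- move/(_ A): jA => jA.
  have lb : q <= Y by apply: lbj; rewrite jA leq_addr.
  rewrite !inE; case: ifP => h; apply/orP; right.
  + have u : Y < q + 2 by apply: ub; lia.
    have : (Y = q) \/ (Y = q.+1) by lia.
    by case => ->; rewrite eqxx ?orbT.
  + have u : Y < q + 3 by apply: ub; lia.
    have : Y = q \/ Y = q.+1 \/ Y = q.+2 by lia.
    by case=> [->|[->|->]]; rewrite eqxx ?orbT.
- move/(_ B): jB => jB.
  rewrite !inE; case: ifP => h.
  + have u : Y < 2 by apply: ub0; lia.
    have : (Y = 0) \/ (Y = 1) by lia.
    by case => ->; rewrite eqxx ?orbT.
  + have : Y = 0 by apply: ds; lia.
    by move ->.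
Qed.


Section Cyclic.
Variables (V : finType) (G : trigraph V) (H K : {group {perm V}}) (g : {perm V}).
Hypotheses (autK : aut_subgroup G K) (sHK : H \subset K) (gK : g \in K)
  (gN : g \in 'N(H)%g)
  (dec : forall k, k \in K -> exists j, exists2 h, h \in H & k = (g ^+ j * h)%g).

Local Notation Hor x := (orbit 'P H x).
Local Notation Kor x := (orbit 'P K x).

Lemma autE k x y : k \in K -> tedge G (k x) (k y) = tedge G x y.
Proof. by move=> kK; move/forall_inP: autK => /(_ k kK) /forallP /(_ x) /forallP /(_ y) /eqP. Qed.

Lemma Hmem h x : h \in H -> h x \in Hor x.
Proof. by move=> hH; rewrite -apermE; apply: mem_orbit. Qed.
Lemma Kmem k x : k \in K -> k x \in Kor x.
Proof. by move=> kK; rewrite -apermE; apply: mem_orbit. Qed.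

Lemma HorE x y : y \in Hor x -> Hor y = Hor x.
Proof. by move=> h; apply/orbit_eqP. Qed.
Lemma KorE x y : y \in Kor x -> Kor y = Kor x.
Proof. by move=> h; apply/orbit_eqP. Qed.

Lemma HorP x y : y \in Hor x -> exists2 h, h \in H & y = h x.
Proof. by case/orbitP => h hH <-; exists h; rewrite ?apermE. Qed.
Lemma KorP x y : y \in Kor x -> exists2 k, k \in K & y = k x.
Proof. by case/orbitP => h hH <-; exists h; rewrite ?apermE. Qed.

Lemma Hor_sub x y : y \in Hor x -> y \in Kor x.
Proof. by case/HorP => h hH ->; apply: Kmem; apply: (subsetP sHK). Qed.

Lemma Hg c x y : y \in Hor x -> (g ^+ c)%g y \in Hor ((g ^+ c)%g x).
Proof.
case/HorP => h hH ->.
have gc : (g ^+ c)%g \in 'N(H)%g by rewrite groupX.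
have -> : (g ^+ c)%g (h x) = (h ^ (g ^+ c))%g ((g ^+ c)%g x).
  by rewrite conjgE -!permM mulKVg.
by apply: Hmem; rewrite memJ_norm.
Qed.

Definition rho v : V := odflt v [pick u in Kor v].
Lemma rho_in v : rho v \in Kor v.
Proof.
rewrite /rho; case: pickP => [u|] //= h.
by move: (h v); rewrite orbit_refl.
Qed.
Lemma rhoE u v : (rho u == rho v) = (Kor u == Kor v).
Proof.
apply/idP/idP => /eqP e; apply/eqP; last first.
  rewrite /rho e; case: pickP => //= h.
  by move: (h v); rewrite orbit_refl.
by rewrite -(KorE (rho_in u)) e (KorE (rho_in v)).
Qed.
Lemma rho_inv v : v \in Kor (rho v).
Proof. by rewrite orbit_sym rho_in. Qed.

Definition N := #[g]%g.

Definition idx v := find (fun i => v \in Hor ((g ^+ i)%g (rho v))) (iota 0 N).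
Definition mm r := (find (fun i => (g ^+ i.+1)%g r \in Hor r) (iota 0 N)).+1.

Lemma gN1 x : (g ^+ N)%g x = x.
Proof. by rewrite /N expg_order perm1. Qed.

Lemma gD a b x : (g ^+ (a + b))%g x = (g ^+ b)%g ((g ^+ a)%g x).
Proof. by rewrite expgD permM. Qed.

Lemma mm_spec r : [/\ 0 < mm r, mm r <= N, (g ^+ mm r)%g r \in Hor r &
   forall i, 0 < i < mm r -> (g ^+ i)%g r \notin Hor r].
Proof.
have hs : has (fun i => (g ^+ i.+1)%g r \in Hor r) (iota 0 N).
  apply/hasP; exists N.-1; first by rewrite mem_iota add0n prednK ?order_gt0 ?leqnn //.
  by rewrite prednK ?order_gt0 // gN1 orbit_refl.
have fN : find (fun i => (g ^+ i.+1)%g r \in Hor r) (iota 0 N) < N.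
  by move: hs; rewrite has_find size_iota.
split => //.
- by have := nth_find 0 hs; rewrite nth_iota ?add0n.
- case=> // i /andP [_ lt].
  have lt' : i < find (fun i => (g ^+ i.+1)%g r \in Hor r) (iota 0 N) := lt.
  have := before_find 0 lt'.
  by rewrite nth_iota ?add0n => [->|] //; apply: ltn_trans lt' fN.
Qed.

Lemma HorX r q : (g ^+ (mm r * q))%g r \in Hor r.
Proof.
have [_ _ hm _] := mm_spec r.
elim: q => [|q IH]; first by rewrite muln0 expg0 perm1 orbit_refl.
rewrite mulnS addnC gD; have := Hg (mm r) IH.
by rewrite (HorE hm).
Qed.

Lemma Hor_mod r j : Hor ((g ^+ j)%g r) = Hor ((g ^+ (j %% mm r))%g r).
Proof.
apply: HorE; rewrite {1}(divn_eq j (mm r)) mulnC gD.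
exact: Hg (HorX r _).
Qed.

Lemma Hor_diff r a b : a < b -> b < mm r ->
  Hor ((g ^+ a)%g r) != Hor ((g ^+ b)%g r).
Proof.
move=> ab bm; apply/eqP => e.
have [_ mN _ hmin] := mm_spec r.
have : (g ^+ b)%g r \in Hor ((g ^+ a)%g r) by rewrite e orbit_refl.
move/(Hg (N - a)); rewrite -!gD.
have aN : a <= N by apply: leq_trans (ltnW ab) (leq_trans (ltnW bm) mN).
rewrite subnKC // gN1.
have -> : b + (N - a) = (b - a) + N by lia.
rewrite gD gN1 => h.
by have := hmin (b - a); rewrite subn_gt0 ab (leq_ltn_trans (leq_subr a b) bm) h => /(_ isT).
Qed.

Lemma idx_spec v : idx v < N /\ v \in Hor ((g ^+ idx v)%g (rho v)).
Proof.
have hs : has (fun i => v \in Hor ((g ^+ i)%g (rho v))) (iota 0 N).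
  have [k kK vk] := KorP (rho_inv v).
  have [j [h hH kE]] := dec kK.
  apply/hasP; exists (j %% N); first by rewrite mem_iota add0n ltn_pmod // order_gt0.
  rewrite /= /N expg_mod_order [X in X \in _]vk kE permM; exact: Hmem.
have fN : find (fun i => v \in Hor ((g ^+ i)%g (rho v))) (iota 0 N) < N.
  by move: hs; rewrite has_find size_iota.
by split => //; have := nth_find 0 hs; rewrite nth_iota ?add0n.
Qed.

Lemma KL v j : v \in Hor ((g ^+ j)%g (rho v)) -> idx v = j %% mm (rho v).
Proof.
move=> vj; set r := rho v; set m := mm r.
have [m0 mN _ _] := mm_spec r.
have jm : j %% m < m by rewrite ltn_pmod.
rewrite (Hor_mod r j) -/m in vj.
have [iN vi] := idx_spec v.
have le : idx v <= j %% m.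
  rewrite leqNgt; apply/negP => lt.
  have := before_find 0 lt; rewrite nth_iota ?add0n ?vj //.
  exact: leq_trans jm mN.
have e : Hor ((g ^+ idx v)%g r) = Hor ((g ^+ (j %% m))%g r).
  by rewrite -(HorE vi) (HorE vj).
move: le; rewrite leq_eqVlt => /orP [/eqP //|lt].
by have := Hor_diff lt jm; rewrite e eqxx.
Qed.

Lemma idx_lt v : idx v < mm (rho v).
Proof.
have [_ vi] := idx_spec v; have := KL vi.
have [m0 _ _ _] := mm_spec (rho v).
by move=> e; rewrite {1}e ltn_pmod.
Qed.

Lemma sameH u v : (rho u == rho v) && (idx u == idx v) = (Hor u == Hor v).
Proof.
apply/idP/eqP => [/andP [/eqP ru /eqP iu]|e].
- have [_ hu] := idx_spec u; have [_ hv] := idx_spec v.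
  by rewrite (HorE hu) (HorE hv) ru iu.
- have ru : rho u = rho v.
    apply/eqP; rewrite rhoE; apply/eqP.
    have : u \in Hor v by rewrite -e orbit_refl.
    by move/Hor_sub/KorE.
  rewrite ru eqxx /=; have [_ hv] := idx_spec v.
  have : u \in Hor ((g ^+ idx v)%g (rho u)).
    by rewrite ru -(HorE hv) -e orbit_refl.
  by move/KL => ->; rewrite ru modn_small ?idx_lt.
Qed.

Lemma shadow u w : tedge G u w -> exists2 n, tedge G (rho u) n &
  rho w = rho n /\ idx w = (idx u + idx n) %% mm (rho n).
Proof.
move=> uw; have [_ hu] := idx_spec u.
have [h hH uE] := HorP hu.
set k := (g ^+ idx u * h)%g.
have kK : k \in K by rewrite groupM ?groupX // (subsetP sHK).
have ku : u = k (rho u) by rewrite permM.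
exists (k^-1 w)%g.
  by rewrite -(autE _ _ kK) -ku permKV.
have wk : w = k (k^-1 w)%g by rewrite permKV.
have rw : rho w = rho (k^-1 w)%g.
  apply/eqP; rewrite rhoE; apply/eqP; apply: KorE; rewrite {1}wk; exact: Kmem.
split => //; rewrite -rw; apply: KL.
set n := (k^-1 w)%g.
have [_ hn] := idx_spec n.
have := Hg (idx u) hn; rewrite -gD addnC -rw => h1.
have : w \in Hor ((g ^+ idx u)%g n) by rewrite wk permM; apply: Hmem.
by move/HorE => e; rewrite -(HorE h1) -e orbit_refl.
Qed.


Lemma deg_max r : degree G r <= maxdeg G.
Proof. exact: (@leq_bigmax _ (fun v => degree G v) r). Qed.

Lemma bound (T : eqType) (kap : V -> T) d : 0 < d ->
  (forall u v, rho u = rho v -> idx u %/ d = idx v %/ d -> kap u = kap v) ->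
  (forall u v, kap u = kap v -> rho u = rho v /\ idx u %/ (2*d) = idx v %/ (2*d)) ->
  qmax_red_degree G (kpart kap) <= 4 * maxdeg G.
Proof.
move=> d0 hA hB; apply/bigmax_leqP => U /imsetP [x0 _ ->] {U}.
set U := [set u | kap u == kap x0].
set r := rho x0; set b := idx x0 %/ (2*d).
pose X n := (b*(2*d) + idx n) %% mm (rho n).
pose cands n := [:: 0; X n %/ d; (X n %/ d).+1;
     if mm (rho n) <= X n + d then 1 else (X n %/ d).+2].
pose F n c := odflt set0 (omap (fun w => [set u | kap u == kap w])
                 [pick w | (rho w == rho n) && (idx w %/ d == c)]).
pose Nr := [set n | tedge G r n].
pose L := [seq F n (nth 0 (cands n) k) | n <- enum Nr, k <- iota 0 4].
have sub : [set W in kpart kap | (W != U) && qred G U W] \subset L.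
  apply/subsetP => W; rewrite inE => /andP [/imsetP [y _ ->] /andP [_ q]].
  have [u [w [uU wW uw]]] : exists u w, [/\ u \in U, w \in [set u | kap u == kap y] & tedge G u w].
    case: (boolP [exists u in U, exists w in [set u | kap u == kap y], tedge G u w]).
      by case/exists_inP => u uU /exists_inP [w wW e]; exists u, w.
    move=> ne; move: q; rewrite /qred => /andP [_ /negP []].
    apply/forall_inP => u uU; apply/forall_inP => w wW; apply: contraNN ne => e.
    by apply/exists_inP; exists u => //; apply/exists_inP; exists w.
  move: uU wW; rewrite !inE => /eqP /hB [ru bu] /eqP wy.
  have [n rn [rw iw]] := shadow uw.
  have [m0 _ _ _] := mm_spec (rho n).
  have inc : idx w %/ d \in cands n.
    by rewrite iw; apply: arith => //; rewrite bu.
  have kP : index (idx w %/ d) (cands n) < 4 by rewrite index_mem.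
  move: (index (idx w %/ d) (cands n)) (nth_index 0 inc) kP => k nk kP.
  apply/allpairsP; exists (n, k); split => /=.
  - by rewrite mem_enum inE /r -ru.
  - by move: kP; clear nk; case: k => [|[|[|[|]]]].
  - rewrite nk /F; case: pickP => [w' /andP [/eqP rw' /eqP iw']|h] /=.
      apply/setP => z; rewrite !inE -wy (hA w' w) //; by rewrite rw'.
    by move: (h w); rewrite rw iw !eqxx.
rewrite /qred_degree; apply: leq_trans (subset_leq_card sub) _.
apply: leq_trans (card_size _) _.
rewrite size_allpairs size_iota -cardE mulnC leq_mul2l /=.
exact: deg_max.
Qed.

Definition kap k v : V * nat := (rho v, idx v %/ 2 ^ k).

Lemma div2k a k : a %/ 2 ^ k.+1 = a %/ 2 ^ k %/ 2.
Proof. by rewrite expnSr divnMA. Qed.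

Lemma twoE k : 2 * 2 ^ k = 2 ^ k.+1.
Proof. by rewrite expnS. Qed.

Lemma stage_bound k : qmax_red_degree G (kpart (kap k)) <= 4 * maxdeg G.
Proof.
apply: (@bound _ _ (2 ^ k)); first by rewrite expn_gt0.
- by move=> u v ru iu; rewrite /kap ru iu.
- by move=> u v [ru iu]; rewrite twoE !div2k iu.
Qed.

Lemma step_path k : exists s, [/\ contraction_path (kpart (kap k)) s,
   last (kpart (kap k)) s = kpart (kap k.+1) &
   forall R, R \in s -> qmax_red_degree G R <= 4 * maxdeg G].
Proof.
have fg : forall u v, kap k u = kap k v -> kap k.+1 u = kap k.+1 v.
  by move=> u v [ru iu]; rewrite /kap ru !div2k iu.
have two : forall u v w, kap k.+1 u = kap k.+1 v -> kap k.+1 u = kap k.+1 w ->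
    [\/ kap k u = kap k v, kap k u = kap k w | kap k v = kap k w].
  move=> u v w; rewrite /kap !div2k => [[ruv iuv] [ruw iuw]].
  move: iuv iuw; set a := idx u %/ 2 ^ k; set b := idx v %/ 2 ^ k; set c := idx w %/ 2 ^ k.
  move=> iuv iuw.
  have : a = b \/ a = c \/ b = c by lia.
  case=> [->|[->|->]]; [apply: Or31|apply: Or32|apply: Or33]; congr pair => //.
  by rewrite -ruv ruw.
have [s [p1 p2 p3]] := merge_all fg two (@closed0 _ _ (kap k.+1)).
exists s; rewrite -(parts0 (kap k) (kap k.+1)) -(partsT (kap k) (kap k.+1)); split => //.
move=> R /p3 [S cS ->]; rewrite -kpart_parts //.
apply: (@bound _ _ (2 ^ k)); first by rewrite expn_gt0.
- move=> u v ru iu; rewrite /kS (cS u v); last by rewrite /kap ru !div2k iu.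
  by rewrite /kap ru iu !div2k iu.
- move=> u v; rewrite /kS; case: ifP => uS; case: ifP => vS //.
  + by case; rewrite /kap twoE => -[-> ->].
  + by case => -[ru iu]; rewrite ru twoE !div2k iu.
Qed.

Lemma chain D : exists s, [/\ contraction_path (kpart (kap 0)) s,
   last (kpart (kap 0)) s = kpart (kap D) &
   forall R, R \in kpart (kap 0) :: s -> qmax_red_degree G R <= 4 * maxdeg G].
Proof.
elim: D => [|D [s [p1 p2 p3]]].
  exists [::]; split => // R; rewrite inE => /eqP ->; exact: stage_bound.
have [s' [q1 q2 q3]] := step_path D.
exists (s ++ s'); split.
- by apply: contraction_path_cat => //; rewrite p2.
- by rewrite last_cat p2.
- move=> R; rewrite inE mem_cat => /or3P [e|i|i].
  + by apply: p3; rewrite inE e.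
  + by apply: p3; rewrite inE i orbT.
  + exact: q3.
Qed.

Lemma kap0E : kpart (kap 0) = gamma_orbit_partition H.
Proof.
apply: eq_imset => x; apply/setP => u; rewrite !inE /kap !divn1 xpair_eqE sameH.
by apply/eqP/idP => [<-|/orbit_eqP //]; rewrite orbit_refl.
Qed.

Lemma kapNE : kpart (kap N) = gamma_orbit_partition K.
Proof.
have z v : idx v %/ 2 ^ N = 0.
  have [iN _] := idx_spec v; apply: divn_small; apply: ltn_trans iN _.
  exact: ltn_expl.
apply: eq_imset => x; apply/setP => u; rewrite !inE /kap !z xpair_eqE eqxx andbT rhoE.
by apply/eqP/idP => [<-|/orbit_eqP //]; rewrite orbit_refl.
Qed.

Theorem cyclic_step : exists s, [/\ contraction_path (gamma_orbit_partition H) s,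
   last (gamma_orbit_partition H) s = gamma_orbit_partition K &
   forall R, R \in gamma_orbit_partition H :: s -> qmax_red_degree G R <= 4 * maxdeg G].
Proof. by have [s] := chain N; rewrite kap0E kapNE; exists s. Qed.

End Cyclic.

Lemma aut_sub (V : finType) (G : trigraph V) (A B : {group {perm V}}) :
  aut_subgroup G B -> A \subset B -> aut_subgroup G A.
Proof.
move=> aB sAB; apply/forall_inP => x xA.
by move/forall_inP: aB; apply; apply: (subsetP sAB).
Qed.

Lemma orbit_trivial (V : finType) (x : V) : orbit 'P [1 {perm V}]%G x = [set x].
Proof.
apply/setP => u; rewrite inE; apply/orbitP/eqP => [[a] |->].
  by rewrite inE => /eqP -> <-; rewrite act1.
by exists 1%g; rewrite ?group1 ?act1.
Qed.

Lemma main_ind (V : finType) (G : trigraph V) n (Gam : {group {perm V}}) :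
  #|Gam| < n -> aut_subgroup G Gam -> solvable Gam ->
  exists s : seq {set {set V}},
    [/\ contraction_path (singletons_partition V) s,
        last (singletons_partition V) s = gamma_orbit_partition Gam
      & forall P, P \in singletons_partition V :: s ->
          qmax_red_degree G P <= 4 * maxdeg G].
Proof.
elim: n Gam => // n IH Gam lt aG sG.
case: (boolP (Gam :==: 1)%g) => [/eqP e|ne].
  have dec0 : forall k, k \in Gam -> exists j, exists2 h, h \in Gam & k = ((1%g : {perm V}) ^+ j * h)%g.
    by move=> k kK; exists 0, k; rewrite // expg0 mul1g.
  have [s [_ _ b]] := @cyclic_step V G Gam Gam 1%g aG (subxx _) (group1 _) (group1 _) dec0.
  have sE : singletons_partition V = gamma_orbit_partition Gam.
    rewrite /gamma_orbit_partition e; apply: eq_imset => x.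
    by rewrite -orbit_trivial.
  exists [::]; split => // P; rewrite inE => /eqP ->; rewrite sE; apply: b.
  by rewrite inE eqxx.
have pr := sol_der1_proper sG (subxx _) ne.
case: (maximal_exists (proper_sub pr)) => [e|[M maxM sM]].
  by move: pr; rewrite e; move/negP: (proper_irrefl Gam).
have prM : M \proper Gam := maxgroupp maxM.
have sMG := proper_sub prM.
have nM : (M <| Gam)%g := sub_der1_normal sM sMG.
have [g gG gM] : exists2 g, g \in Gam & g \notin M by case/properP: prM => _.
have gN : g \in 'N(M)%g by apply: (subsetP (normal_norm nM)).
have cN : <[g]>%g \subset 'N(M)%g by rewrite cycle_subG.
have JE : ((<[g]> <*> M)%G : {set _}) = Gam.
  apply/eqP; rewrite eqEproper join_subG cycle_subG gG sMG /=.
  apply/negP => prJ.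
  have := (maxgroupP maxM).2 _ prJ (joing_subr _ _) => eJ.
  by move: gM; rewrite -eJ /= (subsetP (joing_subl _ _)) // cycle_id.
have dec : forall k, k \in Gam -> exists j, exists2 h, h \in M & k = (g ^+ j * h)%g.
  move=> k; rewrite -JE /= norm_joinEl // => /mulsgP [x y xg yM ->].
  by case/cycleP: xg => j ->; exists j, y.
have [s1 [p1 l1 b1]] := IH M (leq_trans (proper_card prM) lt) (aut_sub aG sMG) (solvableS sMG sG).
have [s2 [p2 l2 b2]] := @cyclic_step V G M Gam g aG sMG gG gN dec.
exists (s1 ++ s2); split.
- by apply: contraction_path_cat => //; rewrite l1.
- by rewrite last_cat l1.
- move=> P; rewrite inE mem_cat => /or3P [e|i|i].
  + by apply: b1; rewrite inE e.
  + by apply: b1; rewrite inE i orbT.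
  + by apply: b2; rewrite inE i orbT.
Qed.

Theorem mainTheorem16 (V : finType) (G : trigraph V) (Gam : {group {perm V}}) :
  aut_subgroup G Gam -> solvable Gam ->
  exists s : seq {set {set V}},
    [/\ contraction_path (singletons_partition V) s,
        last (singletons_partition V) s = gamma_orbit_partition Gam
      & forall P, P \in singletons_partition V :: s ->
          qmax_red_degree G P <= 4 * maxdeg G].
Proof. exact: (@main_ind V G #|Gam|.+1 Gam (ltnSn _)). Qed.
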